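(* Let $(A,B)$ be a finite-dimensional even-symmetric associative superalgebra over an algebraically closed field $\mathbb{K}$ of characteristic zero such that $A_{\bar 0}$ is a semi-simple $A_{\bar 0}$-bimodule. If $\mathrm{Ann}(A)=\{0\}$, then $A$ is an orthogonal direct sum of simple even-symmetric associative superalgebras, i.e. $A=A_1\oplus\cdots\oplus A_m$ where the $A_k$ are pairwise $B$-orthogonal graded two-sided ideals, each simple as an associative superalgebra, with $B|_{A_k\times A_k}$ non-degenerate.
   Context: A superalgebra is $\mathbb{Z}_2$-graded, $A=A_{\bar 0}\oplus A_{\bar 1}$, $A_\alpha A_\beta\subseteq A_{\alpha+\beta}$. An even-symmetric structure on $A$ is a bilinear form $B$ with $B(A_{\bar 0},A_{\bar 1})=B(A_{\bar 1},A_{\bar 0})=0$ which is supersymmetric ($B(x,y)=(-1)^{|x||y|}B(y,x)$), associative ($B(xy,z)=B(x,yz)$) and non-degenerate. A superalgebra is simple if its product is non-zero and it has no graded two-sided ideals other than $\{0\}$ and itself. $A_{\bar 0}$ is an $A_{\bar 0}$-bimodule via multiplication, semi-simple if every sub-bimodule has a complementary sub-bimodule. $\mathrm{Ann}(A)=\{x: xA=Ax=\{0\}\}$. *)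

(* Defs.v *)
(* A finite-dimensional (not necessarily unital) associative
   superalgebra over K is modelled as a finite-dimensional K-vector space
   V : vectType K with a bilinear multiplication [mul] and a Z_2-grading
   given by two subspaces [Ag false] (= A_0bar) and [Ag true] (= A_1bar). *)
From HB Require Import structures.
From mathcomp Require Import all_boot all_order all_algebra.
Set Implicit Arguments. Unset Strict Implicit. Unset Printing Implicit Defensive.
Import GRing.Theory.
Local Open Scope ring_scope.

Section SuperAlg.
Variables (K : fieldType) (V : vectType K).

Definition bilinear_mul (mul : V -> V -> V) : Prop :=
  (forall (a : K) (x y z : V), mul (a *: x + y) z = a *: mul x z + mul y z) /\
  (forall (a : K) (x y z : V), mul x (a *: y + z) = a *: mul x y + mul x z).

Definition assoc_mul (mul : V -> V -> V) : Prop :=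
  forall x y z : V, mul (mul x y) z = mul x (mul y z).

Definition is_grading (mul : V -> V -> V) (Ag : bool -> {vspace V}) : Prop :=
  (Ag false :&: Ag true = 0)%VS /\ (Ag false + Ag true = fullv)%VS /\
  (forall (i j : bool) (x y : V), x \in Ag i -> y \in Ag j -> mul x y \in Ag (i (+) j)).

Definition bilinear_form (B : V -> V -> K) : Prop :=
  (forall (a : K) (x y z : V), B (a *: x + y) z = a * B x z + B y z) /\
  (forall (a : K) (x y z : V), B x (a *: y + z) = a * B x y + B x z).

Definition even_symmetric (mul : V -> V -> V) (Ag : bool -> {vspace V})
    (B : V -> V -> K) : Prop :=
  bilinear_form B /\
  (forall (i j : bool) (x y : V), i != j -> x \in Ag i -> y \in Ag j -> B x y = 0) /\
  (forall (i j : bool) (x y : V), x \in Ag i -> y \in Ag j ->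
      B x y = (-1) ^+ (i && j) * B y x) /\
  (forall x y z : V, B (mul x y) z = B x (mul y z)) /\
  (forall x : V, (forall y : V, B x y = 0) -> x = 0).

Definition graded (Ag : bool -> {vspace V}) (I : {vspace V}) : Prop :=
  I = (I :&: Ag false + I :&: Ag true)%VS.

Definition ideal_in (mul : V -> V -> V) (S I : {vspace V}) : Prop :=
  forall x y : V, x \in S -> y \in I -> mul x y \in I /\ mul y x \in I.

Definition simple_in (mul : V -> V -> V) (Ag : bool -> {vspace V})
    (S : {vspace V}) : Prop :=
  (exists x y : V, [/\ x \in S, y \in S & mul x y != 0]) /\
  (forall I : {vspace V}, (I <= S)%VS -> graded Ag I -> ideal_in mul S I ->
      I = 0%VS \/ I = S).

Definition sub_bimodule (mul : V -> V -> V) (A0 W : {vspace V}) : Prop :=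
  (W <= A0)%VS /\
  (forall a w : V, a \in A0 -> w \in W -> mul a w \in W /\ mul w a \in W).

Definition semisimple_even_part (mul : V -> V -> V) (A0 : {vspace V}) : Prop :=
  forall W : {vspace V}, sub_bimodule mul A0 W ->
    exists W' : {vspace V}, sub_bimodule mul A0 W' /\
      (W :&: W' = 0)%VS /\ (W + W' = A0)%VS.

Definition trivial_annihilator (mul : V -> V -> V) : Prop :=
  forall x : V, (forall y : V, mul x y = 0 /\ mul y x = 0) -> x = 0.

Definition nondeg_on (B : V -> V -> K) (S : {vspace V}) : Prop :=
  forall x : V, x \in S -> (forall y : V, y \in S -> B x y = 0) -> x = 0.

End SuperAlg.

(* Main.v *)
Require Import Defs.
From HB Require Import structures.
From mathcomp Require Import all_boot all_order all_algebra.
Set Implicit Arguments. Unset Strict Implicit. Unset Printing Implicit Defensive.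
Import GRing.Theory.
Local Open Scope ring_scope.

From Stdlib Require Import Classical.
Section Main.
Variables (K : fieldType) (V : vectType K) (mul : V -> V -> V)
  (Ag : bool -> {vspace V}) (B : V -> V -> K).
Hypotheses (bm : bilinear_mul mul) (am : assoc_mul mul) (gr : is_grading mul Ag)
  (es : even_symmetric mul Ag B) (ss : semisimple_even_part mul (Ag false))
  (ta : trivial_annihilator mul).

Lemma dbl0 (T : zmodType) (x : T) : x = x + x -> x = 0.
Proof. by move/(congr1 (fun t => t - x)); rewrite subrr addrK => /esym. Qed.

Lemma mulDl x y z : mul (x + y) z = mul x z + mul y z.
Proof. by have := bm.1 1 x y z; rewrite !scale1r. Qed.
Lemma mulDr x y z : mul x (y + z) = mul x y + mul x z.
Proof. by have := bm.2 1 x y z; rewrite !scale1r. Qed.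
Lemma mul0l z : mul 0 z = 0.
Proof. by apply: dbl0; rewrite -mulDl addr0. Qed.
Lemma mul0r z : mul z 0 = 0.
Proof. by apply: dbl0; rewrite -mulDr addr0. Qed.
Lemma BDl x y z : B (x + y) z = B x z + B y z.
Proof. by have := es.1.1 1 x y z; rewrite scale1r mul1r. Qed.
Lemma BDr x y z : B x (y + z) = B x y + B x z.
Proof. by have := es.1.2 1 x y z; rewrite scale1r mul1r. Qed.
Lemma B0l z : B 0 z = 0.
Proof. by apply: dbl0; rewrite -BDl addr0. Qed.
Lemma B0r z : B z 0 = 0.
Proof. by apply: dbl0; rewrite -BDr addr0. Qed.
Lemma BZr a x y : B x (a *: y) = a * B x y.
Proof. by have := es.1.2 a x y 0; rewrite addr0 B0r addr0. Qed.
Lemma BZl a x y : B (a *: x) y = a * B x y.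
Proof. by have := es.1.1 a x 0 y; rewrite addr0 B0l addr0. Qed.

Lemma gmul i j x y : x \in Ag i -> y \in Ag j -> mul x y \in Ag (i (+) j).
Proof. exact: gr.2.2. Qed.
Lemma Bpar i j x y : i != j -> x \in Ag i -> y \in Ag j -> B x y = 0.
Proof. exact: es.2.1. Qed.
Lemma Bsym i j x y : x \in Ag i -> y \in Ag j -> B x y = (-1) ^+ (i && j) * B y x.
Proof. exact: es.2.2.1. Qed.
Lemma Bass x y z : B (mul x y) z = B x (mul y z).
Proof. exact: es.2.2.2.1. Qed.

Lemma decomp x : exists x0 x1, [/\ x0 \in Ag false, x1 \in Ag true & x = x0 + x1].
Proof.
have : x \in (Ag false + Ag true)%VS by rewrite gr.2.1 memvf.
by case/memv_addP=> x0 H0 [x1 H1 ->]; exists x0, x1.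
Qed.

Lemma L1 v : (forall i y, y \in Ag i -> B v y = 0) -> v = 0.
Proof.
move=> H; apply: es.2.2.2.2 => y; have [y0 [y1 [H0 H1 ->]]] := decomp y.
by rewrite BDr (H _ _ H0) (H _ _ H1) addr0.
Qed.

Lemma R1 v : (forall i y, y \in Ag i -> B y v = 0) -> v = 0.
Proof.
move=> H; have [v0 [v1 [H0 H1 Ev]]] := decomp v.
have E i y : y \in Ag i -> B y v0 + B y v1 = 0 by move=> Hy; rewrite -BDr -Ev (H _ _ Hy).
suff [h0 h1] : v0 = 0 /\ v1 = 0 by rewrite Ev h0 h1 addr0.
split; apply: L1 => -[] y Hy.
- by rewrite (Bpar _ H0 Hy).
- by rewrite (Bsym H0 Hy) mul1r; have := E _ _ Hy; rewrite (Bpar _ Hy H1) ?addr0.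
- rewrite (Bsym H1 Hy) /=; have := E _ _ Hy; rewrite (Bpar _ Hy H0) // add0r => ->.
  by rewrite mulr0.
- by rewrite (Bpar _ H1 Hy).
Qed.

Lemma mk_ann v : (forall i y, y \in Ag i -> mul v y = 0 /\ mul y v = 0) -> v = 0.
Proof.
move=> H; apply: ta => y; have [y0 [y1 [H0 H1 ->]]] := decomp y.
have [a b] := H _ _ H0; have [c d] := H _ _ H1.
by rewrite mulDl mulDr a b c d !addr0.
Qed.

Lemma L2 v : (forall i j p q, p \in Ag i -> q \in Ag j -> B v (mul p q) = 0) -> v = 0.
Proof.
move=> H.
have H1 i y : y \in Ag i -> mul v y = 0.
  by move=> Hy; apply: L1 => j q Hq; rewrite Bass (H _ _ _ _ Hy Hq).
apply: mk_ann => i y Hy; split; first exact: H1 Hy.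
apply: L1 => j q Hq; by rewrite Bass (H1 _ _ Hq) B0r.
Qed.

Lemma R2 v : (forall i j p q, p \in Ag i -> q \in Ag j -> B (mul p q) v = 0) -> v = 0.
Proof.
move=> H.
have H1 i y : y \in Ag i -> mul y v = 0.
  by move=> Hy; apply: R1 => j q Hq; rewrite -Bass (H _ _ _ _ Hq Hy).
apply: mk_ann => i y Hy; split; last exact: H1 Hy.
apply: R1 => j q Hq; by rewrite -Bass (H1 _ _ Hq) B0l.
Qed.


Lemma key (N : {vspace V}) : graded Ag N -> ideal_in mul fullv N ->
  (forall x y, x \in N -> y \in N -> B x y = 0) -> N = 0%VS.
Proof.
move=> gN iN isoN.
have iNl a x : x \in N -> mul a x \in N by move=> Hx; exact: (iN a x (memvf a) Hx).1.
have iNr a x : x \in N -> mul x a \in N by move=> Hx; exact: (iN a x (memvf a) Hx).2.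
pose N0 := (N :&: Ag false)%VS.
have inN0 x : x \in N -> x \in Ag false -> x \in N0 by move=> *; rewrite memv_cap; apply/andP.
have N0N0 u u' : u \in N0 -> u' \in N0 -> mul u u' = 0.
  move=> /memv_capP[Hu _] /memv_capP[Hu' _]; apply: L1 => i z _.
  by rewrite Bass isoN // iNr.
have sb : sub_bimodule mul (Ag false) N0.
  split; first exact: capvSr.
  move=> a w Ha /memv_capP[Hw Hw0]; rewrite !memv_cap iNl ?iNr //=.
  by rewrite (gmul Ha Hw0) (gmul Hw0 Ha).
have [W' [[sWs sW'] [capW sumW]]] := ss sb.
have N0A0 u a : u \in N0 -> a \in Ag false -> mul u a = 0 /\ mul a u = 0.
  move=> Hu Ha; move: Ha; rewrite -sumW => /memv_addP[n' Hn' [w' Hw' ->]].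
  have Hu0 : u \in Ag false by move: Hu => /memv_capP[].
  have Hw'0 : w' \in Ag false by exact: (subvP sWs).
  have e1 : mul u w' = 0.
    apply/eqP; rewrite -memv0 -capW memv_cap; apply/andP; split.
    - by have := (sb.2 _ _ Hw'0 Hu).2.
    - by have := (sW' _ _ Hu0 Hw').1.
  have e2 : mul w' u = 0.
    apply/eqP; rewrite -memv0 -capW memv_cap; apply/andP; split.
    - by have := (sb.2 _ _ Hw'0 Hu).1.
    - by have := (sW' _ _ Hu0 Hw').2.
  by rewrite mulDl mulDr e1 e2 !N0N0 // !addr0.
have st4 u q y : u \in N0 -> q \in Ag true -> y \in Ag true -> mul (mul q u) y = 0.
  move=> Hu Hq Hy.
  have Hu0 : u \in Ag false by move: Hu => /memv_capP[].
  have Hw : mul (mul q u) y \in N0.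
    apply: inN0; first by apply/iNr/iNl; case/memv_capP: Hu.
    by have := gmul (gmul Hq Hu0) Hy.
  apply: R2 => i j p p' Hp Hp'; rewrite Bass.
  case: j Hp' => Hp'.
  - by rewrite -am -am (N0A0 _ _ Hu (gmul Hp' Hq)).2 mul0l B0r.
  - by rewrite (N0A0 _ _ Hw Hp').2 B0r.
have st5 u y : u \in N0 -> y \in Ag true -> mul u y = 0.
  move=> Hu Hy.
  have Hu0 : u \in Ag false by move: Hu => /memv_capP[].
  apply: L2 => i j p q Hp Hq; rewrite -Bass am.
  case: i Hp => Hp.
  - by rewrite (N0A0 _ _ Hu (gmul Hy Hp)).1 B0l.
  - rewrite -am Bass.
    have Huy := gmul Hu0 Hy.
    case: j Hq => Hq.
    + rewrite (Bsym Huy (gmul Hp Hq)) /= Bass -am st4 // B0r.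
      by rewrite mulr0.
    + by rewrite (Bpar _ Huy (gmul Hp Hq)).
have st5' u y : u \in N0 -> y \in Ag true -> mul y u = 0.
  move=> Hu Hy.
  apply: L2 => i j p q Hp Hq; rewrite Bass.
  case: i Hp; case: j Hq => Hq Hp.
  - by rewrite (N0A0 _ _ Hu (gmul Hp Hq)).1 B0r.
  - by rewrite -am (st5 _ _ Hu Hp) mul0l B0r.
  - by rewrite -am (N0A0 _ _ Hu Hp).1 mul0l B0r.
  - by rewrite (N0A0 _ _ Hu (gmul Hp Hq)).1 B0r.
have N00 u : u \in N0 -> u = 0.
  move=> Hu; apply: mk_ann => -[] y Hy.
  - by rewrite st5 ?st5'.
  - exact: N0A0.
have N10 n : n \in N -> n \in Ag true -> n = 0.
  move=> Hn Hn1.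
  have nx x : x \in Ag true -> mul n x = 0 /\ mul x n = 0.
    move=> Hx; split; apply: N00; apply: inN0.
    - exact: iNr.
    - by have := gmul Hn1 Hx.
    - exact: iNl.
    - by have := gmul Hx Hn1.
  apply: mk_ann => -[] y Hy; first exact: nx.
  split; apply: L1 => -[] z Hz.
  - rewrite Bass (Bsym Hn1 (gmul Hy Hz)) /= Bass (nx _ Hz).2 B0r.
    by rewrite mulr0.
  - by rewrite (Bpar _ (gmul Hn1 Hy) Hz).
  - by rewrite Bass (nx _ Hz).1 B0r.
  - by rewrite (Bpar _ (gmul Hy Hn1) Hz).
apply/eqP; rewrite -subv0; apply/subvP => x Hx.
move: Hx; rewrite gN => /memv_addP[x0 /memv_capP[H0 H0'] [x1 /memv_capP[H1 H1'] ->]].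
by rewrite memv0 (N00 x0) ?inN0 // (N10 x1) // addr0.
Qed.


Definition perpv (W : {vspace V}) : {vspace V} :=
  lker (linfun (fun x : V => \row_(i < \dim W) B x (vbasis W)`_i)).

Lemma perp_lin (W : {vspace V}) :
  linear (fun x : V => \row_(i < \dim W) B x (vbasis W)`_i : 'rV[K]_(\dim W)).
Proof. by move=> a x y; apply/rowP => i; rewrite !mxE es.1.1. Qed.

Lemma Bsum_r x (W : {vspace V}) (F : 'I_(\dim W) -> V) :
  B x (\sum_i F i) = \sum_i B x (F i).
Proof. exact: (big_morph (B x) (BDr x) (B0r x)). Qed.

Lemma memv_perp (W : {vspace V}) x :
  x \in perpv W <-> (forall w, w \in W -> B x w = 0).
Proof.
pose fL : {linear V -> 'rV[K]_(\dim W)} :=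
  HB.pack (fun x : V => \row_(i < \dim W) B x (vbasis W)`_i)
    (GRing.isLinear.Build _ _ _ _ _ (perp_lin W)).
rewrite /perpv memv_ker (lfunE fL) /=; split.
- move=> /eqP H w Hw; rewrite (coord_vbasis Hw) Bsum_r big1 // => i _.
  have := congr1 (fun M : 'rV_(\dim W) => M 0 i) H; rewrite !mxE => h.
  by rewrite BZr h mulr0.
- move=> H; apply/eqP/rowP => i; rewrite !mxE; apply: H.
  by apply: vbasis_mem; apply: mem_nth; rewrite size_tuple.
Qed.

Lemma perp_dim (W U : {vspace V}) : (\dim U <= \dim (U :&: perpv W) + \dim W)%N.
Proof.
rewrite -{1}(limg_ker_dim (linfun (fun x : V => \row_(i < \dim W) B x (vbasis W)`_i)) U).
rewrite leq_add2l; apply: leq_trans (dimvS (subvf _)) _.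
by rewrite dimvf /dim /= mul1n.
Qed.


Lemma gdec (I : {vspace V}) x : graded Ag I -> x \in I ->
  exists x0 x1, [/\ x0 \in I, x0 \in Ag false, x1 \in I, x1 \in Ag true & x = x0 + x1].
Proof.
move=> gI; rewrite {1}gI => /memv_addP[x0 /memv_capP[H0 H0'] [x1 /memv_capP[H1 H1'] ->]].
by exists x0, x1.
Qed.

Lemma gintro (I : {vspace V}) :
  (forall x, x \in I -> exists x0 x1,
     [/\ x0 \in I, x0 \in Ag false, x1 \in I, x1 \in Ag true & x = x0 + x1]) ->
  graded Ag I.
Proof.
move=> H; rewrite /graded; apply: subv_anti; apply/andP; split.
- apply/subvP => x /H [x0 [x1 [a b c d ->]]].
  by apply: memv_add; rewrite memv_cap; apply/andP.
- by rewrite subv_add !capvSl.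
Qed.

Lemma gfull : graded Ag fullv.
Proof. by rewrite /graded !capfv gr.2.1. Qed.

Lemma perp_sym (W : {vspace V}) x : graded Ag W ->
  (forall w, w \in W -> B x w = 0) -> forall w, w \in W -> B w x = 0.
Proof.
move=> gW H w Hw.
have [x0 [x1 [H0 H1 Ex]]] := decomp x; subst x.
have [w0 [w1 [Hw0 Hw0' Hw1 Hw1' ->]]] := gdec gW Hw.
have e0 : B x0 w0 = 0 by have := H _ Hw0; rewrite BDl (Bpar _ H1 Hw0') // addr0.
have e1 : B x1 w1 = 0 by have := H _ Hw1; rewrite BDl (Bpar _ H0 Hw1') // add0r.
rewrite !BDl !BDr (Bpar _ Hw0' H1) // (Bpar _ Hw1' H0) // addr0 add0r.
by rewrite (Bsym Hw0' H0) (Bsym Hw1' H1) e0 e1 !mulr0 addr0.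
Qed.

Lemma perp_sym' (W : {vspace V}) x : graded Ag W ->
  (forall w, w \in W -> B w x = 0) -> forall w, w \in W -> B x w = 0.
Proof.
move=> gW H w Hw.
have [x0 [x1 [H0 H1 Ex]]] := decomp x; subst x.
have [w0 [w1 [Hw0 Hw0' Hw1 Hw1' ->]]] := gdec gW Hw.
have e0 : B w0 x0 = 0 by have := H _ Hw0; rewrite BDr (Bpar _ Hw0' H1) // addr0.
have e1 : B w1 x1 = 0 by have := H _ Hw1; rewrite BDr (Bpar _ Hw1' H0) // add0r.
rewrite !BDl !BDr (Bpar _ H0 Hw1') // (Bpar _ H1 Hw0') // addr0 add0r.
by rewrite (Bsym H0 Hw0') (Bsym H1 Hw1') e0 e1 !mulr0 addr0.
Qed.

Lemma perp_graded (W I : {vspace V}) : graded Ag W -> graded Ag I ->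
  graded Ag (I :&: perpv W).
Proof.
move=> gW gI; apply: gintro => x /memv_capP[Hx /memv_perp Hp].
have [y0 [y1 [a b c d Ex]]] := gdec gI Hx.
have E w : w \in W -> B y0 w = 0 /\ B y1 w = 0.
  move=> Hw; have [w0 [w1 [Hw0 Hw0' Hw1 Hw1' ->]]] := gdec gW Hw.
  have f0 := Hp _ Hw0; have f1 := Hp _ Hw1; rewrite Ex !BDl in f0 f1.
  rewrite (Bpar _ d Hw0') // addr0 in f0; rewrite (Bpar _ b Hw1') // add0r in f1.
  by rewrite !BDr f0 f1 (Bpar _ b Hw1') // (Bpar _ d Hw0') // !addr0.
exists y0, y1; split => //; rewrite memv_cap ?a ?c; apply/memv_perp => w Hw; by case: (E w Hw).
Qed.

Lemma perp_ideal (W : {vspace V}) : graded Ag W -> ideal_in mul fullv W ->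
  ideal_in mul fullv (perpv W).
Proof.
move=> gW iW a x _ /memv_perp Hx; split; apply/memv_perp.
- apply: perp_sym' => // w Hw; rewrite -Bass; apply: (perp_sym gW Hx).
  exact: (iW a w (memvf a) Hw).2.
- by move=> w Hw; rewrite Bass Hx // (iW a w (memvf a) Hw).1.
Qed.

Lemma cap_ideal (I J : {vspace V}) : ideal_in mul fullv I -> ideal_in mul fullv J ->
  ideal_in mul fullv (I :&: J).
Proof.
move=> iI iJ a x Ha /memv_capP[HI HJ].
have [p q] := iI a x Ha HI; have [r t] := iJ a x Ha HJ.
by rewrite !memv_cap p q r t.
Qed.

Lemma nondeg_cap (W : {vspace V}) : nondeg_on B W -> (W :&: perpv W = 0)%VS.
Proof.
move=> nW; apply/eqP; rewrite -subv0; apply/subvP => x /memv_capP[Hx /memv_perp Hp].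
by rewrite memv0 (nW x Hx Hp).
Qed.

Lemma compl (W I : {vspace V}) : (W <= I)%VS -> nondeg_on B W ->
  (W + (I :&: perpv W))%VS = I /\ (W :&: (I :&: perpv W))%VS = 0%VS.
Proof.
move=> sWI nW.
have c0 : (W :&: (I :&: perpv W))%VS = 0%VS.
  apply/eqP; rewrite -subv0 -(nondeg_cap nW); apply: capvS => //; exact: capvSr.
split => //; apply/eqP; rewrite eqEdim subv_add sWI capvSl /=.
rewrite dimv_disjoint_sum // addnC; exact: perp_dim.
Qed.


Definition Pgood (I X : {vspace V}) :=
  [/\ graded Ag X, ideal_in mul fullv X, nondeg_on B X, (X <= I)%VS & X != 0%VS].

Lemma exists_min I X : Pgood I X ->
  exists J, Pgood I J /\ forall Y, Pgood I Y -> (Y <= J)%VS -> Y = J.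
Proof.
move=> PX; have [n ltXn] := ubnP (\dim X); elim: n X ltXn PX => // n IH X ltXn PX.
case: (classic (exists Y, [/\ Pgood I Y, (Y <= X)%VS & Y <> X])).
- move=> [Y [PY sYX nYX]]; apply: (IH Y) => //.
  rewrite -ltnS; apply: leq_trans ltXn; rewrite ltnS.
  by rewrite (ltn_leqif (dimv_leqif_eq sYX)); apply/eqP.
- move=> Hn; exists X; split => // Y PY sYX.
  by apply: NNPP => nYX; apply: Hn; exists Y.
Qed.

Lemma JpJ (J : {vspace V}) : graded Ag J -> ideal_in mul fullv J -> nondeg_on B J ->
  forall x y, x \in J -> y \in perpv J -> mul x y = 0 /\ mul y x = 0.
Proof.
move=> gJ iJ nJ x y Hx Hy.
have c := nondeg_cap nJ; have iP := perp_ideal gJ iJ.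
split; apply/eqP; rewrite -memv0 -c memv_cap.
- by rewrite (iJ y x (memvf _) Hx).2 (iP x y (memvf _) Hy).1.
- by rewrite (iJ y x (memvf _) Hx).1 (iP x y (memvf _) Hy).2.
Qed.

Lemma fullJ (J : {vspace V}) : nondeg_on B J -> (J + perpv J)%VS = fullv.
Proof. by move=> nJ; have [e _] := compl (subvf J) nJ; rewrite capfv in e. Qed.

Lemma simple_min I J : Pgood I J -> (forall Y, Pgood I Y -> (Y <= J)%VS -> Y = J) ->
  simple_in mul Ag J.
Proof.
move=> [gJ iJ nJ sJI nzJ] minJ.
have fJ := fullJ nJ; have jp := JpJ gJ iJ nJ.
split.
- case: (classic (exists x y, [/\ x \in J, y \in J & mul x y != 0])) => // Hn.
  exfalso; have [x Hx nx] : exists2 x, x \in J & x \notin 0%VS.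
    by apply/subvPn; rewrite subv0.
  have z x' y : x' \in J -> y \in J -> mul x' y = 0.
    move=> H1 H2; case: (eqVneq (mul x' y) 0) => // ne; case: Hn; by exists x', y.
  move: nx; rewrite memv0 (ta (x := x)) ?eqxx // => y.
  have : y \in (J + perpv J)%VS by rewrite fJ memvf.
  case/memv_addP => j Hj [j' Hj' ->].
  by rewrite mulDr mulDl (z x j) // (z j x) // (jp _ _ Hx Hj').1 (jp _ _ Hx Hj').2 !addr0.
- move=> K' sK gK iK.
  have iKf : ideal_in mul fullv K'.
    move=> a y _ Hy.
    have : a \in (J + perpv J)%VS by rewrite fJ memvf.
    case/memv_addP => j Hj [j' Hj' ->].
    have HyJ := subvP sK _ Hy.
    rewrite mulDl mulDr (jp _ _ HyJ Hj').1 (jp _ _ HyJ Hj').2 !addr0.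
    exact: iK.
  have nK : nondeg_on B K'.
    have N0 : (K' :&: perpv K')%VS = 0%VS.
      apply: key; [exact (perp_graded gK gK) | exact (cap_ideal iKf (perp_ideal gK iKf)) |].
      move=> x1 y1 /memv_capP[_ Hx1] /memv_capP[Hy1 _]; exact: (proj1 (memv_perp _ _) Hx1).
    move=> x Hx Hp; apply/eqP; rewrite -memv0 -N0 memv_cap Hx; apply/memv_perp.
    exact: Hp.
  case: (eqVneq K' 0%VS) => [-> | nz]; [by left | right].
  apply: minJ => //; split => //; exact: subv_trans sK sJI.
Qed.


Lemma decomp_ind n (I : {vspace V}) : (\dim I < n)%N -> graded Ag I ->
  ideal_in mul fullv I -> nondeg_on B I ->
  exists (m : nat) (Ak : 'I_m -> {vspace V}),
    [/\ (forall k : 'I_m,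
           [/\ graded Ag (Ak k), ideal_in mul fullv (Ak k),
               simple_in mul Ag (Ak k) & nondeg_on B (Ak k)]),
        (forall (i j : 'I_m) (x y : V), i != j -> x \in Ak i -> y \in Ak j ->
           B x y = 0),
        directv (\sum_(k < m) Ak k)%VS
      & (\sum_(k < m) Ak k)%VS = I].
Proof.
elim: n I => // n IH I ltIn gI iI nI.
case: (eqVneq I 0%VS) => [-> | nzI].
  exists 0, (fun _ => 0%VS); split; first by case.
  - by case.
  - by apply/directv_sumP => -[].
  - by rewrite big_ord0.
have PI : Pgood I I by split.
have [J [[gJ iJ nJ sJI nzJ] minJ]] := exists_min PI.
have sJ : simple_in mul Ag J by apply: simple_min minJ; split.
have [eJ cJ] := compl sJI nJ.
set J' := (I :&: perpv J)%VS in eJ cJ.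
have gJ' : graded Ag J' by exact: perp_graded.
have iJ' : ideal_in mul fullv J' by exact: cap_ideal iI (perp_ideal gJ iJ).
have nJ' : nondeg_on B J'.
  move=> x /memv_capP[HxI /memv_perp HxJ] H; apply: nI => // y.
  rewrite -eJ => /memv_addP[j Hj [j' Hj' ->]].
  by rewrite BDr HxJ // H // addr0.
have dJ' : (\dim J' < n)%N.
  have e := dimv_disjoint_sum cJ; rewrite eJ in e.
  have H : (\dim J' < \dim I)%N.
    by rewrite e -{1}[\dim J']add0n ltn_add2r lt0n dimv_eq0.
  exact: leq_trans H (ltnSE ltIn).
have [m [Ak [pc orth dir sm]]] := IH J' dJ' gJ' iJ' nJ'.
have sAk k : (Ak k <= J')%VS by rewrite -sm (sumv_sup k).
pose F (k : 'I_m.+1) := oapp Ak J (unlift ord0 k).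
have eF : (\sum_(k < m.+1) F k = J + \sum_(k < m) Ak k)%VS.
  rewrite big_ord_recl /F unlift_none /=; congr (_ + _)%VS.
  by apply: eq_bigr => k _; rewrite liftK.
exists m.+1, F; split.
- move=> k; rewrite /F; case: (unliftP ord0 k) => [k' _|_] /=; first exact: pc.
  by split.
- move=> i j x y; rewrite /F.
  case: (unliftP ord0 i) => [i' ->|->]; case: (unliftP ord0 j) => [j' ->|->] //=.
  + by rewrite (inj_eq lift_inj) => nij; apply: orth.
  + move=> _ Hx Hy; have := subvP (sAk i') _ Hx.
    by case/memv_capP => _ /memv_perp; apply.
  + move=> _ Hx Hy; have := subvP (sAk j') _ Hy.
    case/memv_capP => _ /memv_perp Hp; exact: (perp_sym gJ Hp).
- move: dir; rewrite !directvE /= eF => /eqP dir.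
  rewrite big_ord_recl /F unlift_none /=.
  rewrite (eq_bigr (fun k => \dim (Ak k))) => [|k _]; last by rewrite liftK.
  by rewrite dimv_disjoint_sum ?dir // sm.
- by rewrite eF sm eJ.
Qed.

End Main.

Theorem mainTheorem14 (K : closedFieldType) (V : vectType K)
    (mul : V -> V -> V) (Ag : bool -> {vspace V}) (B : V -> V -> K) :
  [pchar K] =i pred0 ->
  bilinear_mul mul -> assoc_mul mul -> is_grading mul Ag ->
  even_symmetric mul Ag B ->
  semisimple_even_part mul (Ag false) ->
  trivial_annihilator mul ->
  exists (m : nat) (Ak : 'I_m -> {vspace V}),
    [/\ (forall k : 'I_m,
           [/\ graded Ag (Ak k), ideal_in mul fullv (Ak k),
               simple_in mul Ag (Ak k) & nondeg_on B (Ak k)]),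
        (forall (i j : 'I_m) (x y : V), i != j -> x \in Ak i -> y \in Ak j ->
           B x y = 0),
        directv (\sum_(k < m) Ak k)%VS
      & (\sum_(k < m) Ak k)%VS = fullv].
Proof.
move=> _ bm am gr es ss ta.
apply: (decomp_ind bm am gr es ss ta (n := (\dim (fullv : {vspace V})).+1)) => //.

- exact: (gfull gr).
- by move=> a x _ _; rewrite !memvf.
- by move=> x _ H; apply: es.2.2.2.2 => y; apply: H; rewrite memvf.
Qed.
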